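(* Let $mG_1,\dots,mG_n$ be a finite sequence of canonical misinformation games such that $mG_{i+1}\in\mathcal{AD}(\{mG_i\})$ for all $i\in\{1,\dots,n-1\}$ and $mG_1\in\mathcal{AD}(\{mG_n\})$. Then $mG_i=mG_j$ for all $i,j$.
   Context: A normal-form game is $G=\langle N,S,P\rangle$ with finite players $N$, finite pure strategy sets $S_i$, positions $S=\times_i S_i$, payoffs $P_i:S\to\mathbb{R}$. A misinformation game $mG=\langle G^0,G^1,\dots,G^{|N|}\rangle$ consists of the actual game $G^0$ and subjective games $G^i$; it is canonical if all $G^i=\langle N,S,P^i\rangle$ differ from $G^0$ only in payoffs and in every $G^i$ all players have equally many pure strategies. $NME(mG)$ is the set of profiles $\sigma=(\sigma_1,\dots,\sigma_{|N|})$ such that each $\sigma_i$ is player $i$'s component of some Nash equilibrium of $G^i$. $\chi(\sigma)=\mathrm{supp}(\sigma_1)\times\dots\times\mathrm{supp}(\sigma_{|N|})$. For $\vec v\in S$, $mG_{\vec v}$ is obtained by replacing, in every $P^i$ ($i\ge1$), the payoff vector at position $\vec v$ by $P^0(\vec v)$ (the actual game $G^0$ is unchanged). For a set $M$ of misinformation games, $\mathcal{AD}(M)=\{mG_{\vec u}: mG\in M,\sigma\in NME(mG),\vec u\in\chi(\sigma)\}$. *)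

(* Defs.v *)
From HB Require Import structures.
From mathcomp Require Import all_boot all_order all_algebra.
Set Implicit Arguments. Unset Strict Implicit. Unset Printing Implicit Defensive.
Import Order.TTheory GRing.Theory Num.Theory.
Local Open Scope ring_scope.

Section MisGames.
Variable R : realFieldType.
(* players N = 'I_np ; every player has k pure strategies 'I_k *)
Variables np k : nat.

Definition pos := {ffun 'I_np -> 'I_k}.
Definition payoff := {ffun pos -> {ffun 'I_np -> R}}.

(* canonical misinformation game: actual game G^0 (payoffs P^0) and one
   subjective game G^i per player, all with the same players and strategies *)
Record mgame := MG { actual : payoff ; subj : {ffun 'I_np -> payoff} }.

Definition mixed (t : {ffun 'I_k -> R}) :=
  (forall a, 0 <= t a) /\ \sum_(a : 'I_k) t a = 1.
Definition profile := {ffun 'I_np -> {ffun 'I_k -> R}}.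
Definition mixed_profile (sg : profile) := forall i, mixed (sg i).

Definition exp_payoff (P : payoff) (sg : profile) (i : 'I_np) : R :=
  \sum_(s : pos) (\prod_(j < np) sg j (s j)) * P s i.

Definition deviate (sg : profile) (i : 'I_np) (t : {ffun 'I_k -> R}) : profile :=
  [ffun j => if j == i then t else sg j].

Definition nash (P : payoff) (sg : profile) :=
  mixed_profile sg /\
  forall i t, mixed t -> exp_payoff P (deviate sg i t) i <= exp_payoff P sg i.

Definition NME (mG : mgame) (sg : profile) :=
  forall i : 'I_np, exists e, nash (subj mG i) e /\ sg i = e i.

Definition chi (sg : profile) (s : pos) := forall i, sg i (s i) != 0.

Definition adapt (mG : mgame) (v : pos) : mgame :=
  MG (actual mG)
     [ffun i => [ffun s => if s == v then actual mG v else subj mG i s]].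

Definition AD (M : mgame -> Prop) (mG' : mgame) :=
  exists mG sg u, [/\ M mG, NME mG sg, chi sg u & mG' = adapt mG u].

End MisGames.

(* Main.v *)
Require Import Defs.
From mathcomp Require Import all_boot all_order all_algebra.
Set Implicit Arguments. Unset Strict Implicit. Unset Printing Implicit Defensive.

Section S.
Variables (R : realFieldType) (np k : nat).

Definition mis (m : mgame R np k) : {set 'I_np * pos np k} :=
  [set p | subj m p.1 p.2 != actual m p.2].

Lemma adapt_sub (m : mgame R np k) u : mis (adapt m u) \subset mis m.
Proof.
apply/subsetP => -[i s]; rewrite !inE /adapt /= !ffunE.
case: (s =P u) => [->|] //=; first by rewrite eqxx.
Qed.

Lemma adapt_eq (m : mgame R np k) u :
  (#|mis m| <= #|mis (adapt m u)|)%N -> adapt m u = m.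
Proof.
move=> H.
have E : mis (adapt m u) = mis m by apply/eqP; rewrite eqEcard adapt_sub H.
case: m E {H} => a s E; rewrite /adapt /=; congr MG.
apply/ffunP => i; apply/ffunP => v; rewrite !ffunE.
case: eqP => // ->.
have : (i, u) \notin mis (adapt (MG a s) u) by rewrite inE /= !ffunE !eqxx.
by rewrite E inE /= negbK => /eqP ->.
Qed.

Lemma step (m m' : mgame R np k) : AD (fun x => x = m) m' ->
  (#|mis m'| <= #|mis m|)%N /\ ((#|mis m| <= #|mis m'|)%N -> m' = m).
Proof.
case=> mG [sg [u [-> _ _ ->]]]; split; first exact: subset_leq_card (adapt_sub _ _).
exact: adapt_eq.
Qed.
End S.

Theorem proposition9 (R : realFieldType) (np k n : nat)
    (mg : nat -> mgame R np k) :
  (forall i, (1 <= i < n)%N -> AD (fun x => x = mg i) (mg i.+1)) ->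
  AD (fun x => x = mg n) (mg 1%N) ->
  forall i j, (1 <= i <= n)%N -> (1 <= j <= n)%N -> mg i = mg j.
Proof.
move=> Hc Hw.
pose d i := #|mis (mg i)|.
have mono : forall j, (1 <= j <= n)%N -> (d j <= d 1%N)%N.
  elim=> [|j IH] //; case: j IH => [|j] IH // /andP [_ Hj].
  have [h _] := step (Hc j.+1 Hj).
  apply: (leq_trans h) (IH _); apply/andP; split => //; exact: ltnW.
have [hw _] := step Hw.
have eq1 : forall i, (1 <= i < n)%N -> mg i.+1 = mg i.
  move=> i /andP [Hi Hin]; have [_ h] := step (Hc i (introT andP (conj Hi Hin))).
  apply: h; apply: leq_trans (mono i _) _; first by rewrite Hi ltnW.
  apply: (leq_trans hw).
  have [h1 _] := Hc i (introT andP (conj Hi Hin)).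
  have mono2 : forall j, (i.+1 <= j <= n)%N -> (d j <= d i.+1)%N.
    elim=> [|j IH] //; rewrite leq_eqVlt; case/andP => /orP [/eqP <- _ //|Hj Hjn].
    have Hj1 : (1 <= j < n)%N by rewrite Hjn andbT; move: Hj; rewrite ltnS; apply: leq_ltn_trans.
    have [h _] := step (Hc j Hj1).
    apply: (leq_trans h) (IH _); by rewrite -ltnS Hj ltnW.
  by apply: mono2; rewrite Hin leqnn.
have all1 : forall i, (1 <= i <= n)%N -> mg i = mg 1%N.
  elim=> [|i IH] //; case: i IH => [|i] IH // /andP [_ Hi].
  rewrite eq1; [apply: IH; exact: ltnW | exact: Hi].
by move=> i j Hi Hj; rewrite all1 // all1.
Qed.
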